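(* Let $n\ge1$, $U_n$ the family of bounded subsets of $\mathbb R^n$, and $\mu:U_n\to B_2$ a measure. (a) If $\mu$ is derivable on the topological closure $\overline A$ of a set $A\in U_n$, then: (a.1) the set $\mathrm{supp}_A\,d\mu=\{x\in A:d\mu(x)=1\}$ is finite; (a.2) for every $x\in A$ there exists $\varepsilon>0$ such that for every $B\in U_n$ with $x\in B$ and $d(B)<\varepsilon$ one has $\mu(B-\{x\})=0$; (a.3) $\mu(A)=\sum_{x\in A}\mu(\{x\})$; (a.4) for every partition $\{A_i\}_{i\in I}$ of $A$ into subsets $A_i\subset A$, $\mu(A)=\sum_{i\in I}\mu(A_i)$. (b) If $\mu$ is derivable (on every set of $U_n$), then the set $\mathrm{supp}\,d\mu=\{x\in\mathbb R^n:d\mu(x)=1\}$ is locally finite.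
   Context: $B_2=\{0,1\}$. $\mu$ is a measure if for every sequence of pairwise disjoint sets of $U_n$ whose union is in $U_n$, only finitely many have $\mu$-value 1 and $\mu$ of the union is their number modulo 2. $d(B)=\sup_{x,y\in B}\|x-y\|$. $\mu$ is derivable at $x$ if there exist $\varepsilon>0$, $a\in B_2$ with $\mu(B)=a$ for all $B\in U_n$ containing $x$ with $d(B)<\varepsilon$; then $d\mu(x)=a$. Derivable on a set means derivable at each of its points. A sum $\sum_{j\in J}a_j$ of elements of $B_2$ indexed by an arbitrary set is defined when only finitely many $a_j$ equal 1, and then equals that number modulo 2. $H\subset\mathbb R^n$ is locally finite if $A\cap H$ is finite for every bounded $A$. *)

(* Defs.v *)
From HB Require Import structures.
From mathcomp Require Import all_boot all_order all_algebra.
From mathcomp Require Import all_classical all_reals all_analysis.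
Set Implicit Arguments. Unset Strict Implicit. Unset Printing Implicit Defensive.
Import Order.TTheory GRing.Theory Num.Theory numFieldNormedType.Exports.
Local Open Scope classical_set_scope.
Local Open Scope ring_scope.

Section B2Defs.
Variables (R : realType) (n : nat).
Local Notation V := 'rV[R]_n.

Definition eucl_norm (x : V) : R := Num.sqrt (\sum_(i < n) x ord0 i ^+ 2).

Definition in_Un (A : set V) : Prop :=
  exists M : R, forall x, A x -> eucl_norm x <= M.

Definition diam (B : set V) : R :=
  sup [set r | exists x y, B x /\ B y /\ r = eucl_norm (x - y)].

(* sum in B_2 = {0,1} (bool, 1 = true) over an arbitrary index set J:
   b2sum_eq J a s  means the sum is defined (finitely many a_j = 1)
   and equals s (that number modulo 2). *)
Definition b2sum_eq {I : Type} (J : set I) (a : I -> bool) (s : bool) : Prop :=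
  exists k : nat, card_eq [set j | J j /\ a j = true] `I_k /\ s = odd k.

Definition is_B2measure (mu : set V -> bool) : Prop :=
  forall F : nat -> set V,
    (forall i, in_Un (F i)) ->
    (forall i j, i <> j -> F i `&` F j = set0) ->
    in_Un (\bigcup_i F i) ->
    b2sum_eq setT (fun i => mu (F i)) (mu (\bigcup_i F i)).

Definition dmu_is (mu : set V -> bool) (x : V) (a : bool) : Prop :=
  exists2 eps : R, 0 < eps &
    forall B, in_Un B -> B x -> diam B < eps -> mu B = a.

Definition derivable_at (mu : set V -> bool) (x : V) : Prop :=
  exists a, dmu_is mu x a.

Definition derivable_on (mu : set V -> bool) (A : set V) : Prop :=
  forall x, A x -> derivable_at mu x.

Definition supp_dmu (mu : set V -> bool) (A : set V) : set V :=
  [set x | A x /\ dmu_is mu x true].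

Definition locally_finite (H : set V) : Prop :=
  forall A, in_Un A -> finite_set (A `&` H).

Definition is_partition {I : Type} (F : I -> set V) (A : set V) : Prop :=
  [/\ forall i, F i !=set0,
      forall i j, i <> j -> F i `&` F j = set0 &
      \bigcup_i F i = A].

End B2Defs.

(* Main.v *)
Require Import Defs.
From HB Require Import structures.
From mathcomp Require Import all_boot all_order all_algebra.
From mathcomp Require Import all_classical all_reals all_analysis.
From mathcomp Require Import finmap.
From mathcomp Require Import ring lra.
Import Order.TTheory GRing.Theory Num.Theory numFieldNormedType.Exports.
Local Open Scope classical_set_scope.
Local Open Scope ring_scope.
Definition pc {T : Type} (S : set T) : bool :=
  odd (#|` @fset_set {classic T} S |)%fset.

Lemma pc0 {T : Type} : pc (@set0 T) = false.
Proof. by rewrite /pc fset_set0 cardfs0. Qed.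

Lemma pc1 {T : Type} (x : T) : pc [set x] = true.
Proof. by rewrite /pc (@fset_set1 {classic T}) cardfs1. Qed.

Lemma pcU {T : Type} (A B : set T) : finite_set A -> finite_set B ->
  A `&` B = set0 -> pc (A `|` B) = pc A (+) pc B.
Proof.
move=> fA fB AB; rewrite /pc (@fset_setU {classic T}) //.
have := cardfsUI (@fset_set {classic T} A) (@fset_set {classic T} B).
rewrite -(@fset_setI {classic T}) // AB fset_set0 cardfs0 addn0 => ->.
by rewrite oddD.
Qed.

Lemma b2E {I : Type} (J : set I) (a : I -> bool) s :
  b2sum_eq J a s <-> finite_set [set j | J j /\ a j = true] /\
                     s = pc [set j | J j /\ a j = true].
Proof.
split.
  move=> [k [hk ->]]; split; first by exists k.
  by rewrite /pc (@card_fset_set {classic I} _ k).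
move=> [[k hk] ->]; exists k; split => //.
by rewrite /pc (@card_fset_set {classic I} _ k).
Qed.

Lemma pc_flip {I : Type} (a : I -> bool) s (j : I) :
  b2sum_eq setT a s -> b2sum_eq setT (fun i => a i (+) `[< i = j >]) (~~ s).
Proof.
move=> /b2E [fS ->]; apply/b2E.
set S := [set j | _ /\ _] in fS *.
case hj: (a j).
  have E : [set i | setT i /\ a i (+) `[< i = j >] = true] = S `\ j.
    apply/funext => i; apply/propext; rewrite /S /=; split.
      move=> [_]; case: (pselect (i = j)) => [->|ne]; first by rewrite hj asboolT.
      by rewrite (asboolF ne) addbF => ai; split => //.
    move=> [[_ ai] ne]; split => //; by rewrite ai (asboolF ne).
  have fS' : finite_set (S `\ j) by apply: finite_setD.
  rewrite E; split => //; have -> : pc S = pc ((S `\ j) `|` [set j]).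
    congr pc.
    apply/funext => i; apply/propext; split.
      by move=> Si; case: (pselect (i = j)) => [->|ne]; [right|left].
    by move=> [[]//|->]; rewrite /S /=.
  have d : (S `\ j) `&` [set j] = set0.
    by apply/funext => i; apply/propext; split => [[[_ ne] eq]|//]; exact: ne eq.
  by rewrite (@pcU _ _ _ fS' (finite_set1 j) d) pc1 addbT negbK.
have E : [set i | setT i /\ a i (+) `[< i = j >] = true] = S `|` [set j].
  apply/funext => i; apply/propext; rewrite /S /=; split.
    move=> [_]; case: (pselect (i = j)) => [->|ne]; first by right.
    by rewrite (asboolF ne) addbF => ai; left.
  move=> [[_ ai]|->]; split => //; last by rewrite hj asboolT.
  case: (pselect (i = j)) => [ej|ne]; first by rewrite ej hj in ai.
  by rewrite ai (asboolF ne).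
rewrite E; split; first by rewrite finite_setU; split => //; exact: finite_set1.
have d : S `&` [set j] = set0.
  by apply/funext => i; apply/propext; split => // -[[_ ai] eq]; by rewrite eq hj in ai.
by rewrite (@pcU _ _ _ fS (finite_set1 j) d) pc1 addbT.
Qed.

Lemma part_par {I T : Type} (F : I -> set T) :
  (forall i j, i <> j -> F i `&` F j = set0) ->
  forall X : set T, finite_set X -> X `<=` \bigcup_i F i ->
  b2sum_eq setT (fun i => pc (X `&` F i)) (pc X).
Proof.
move=> disj X /(@finite_seqP {classic T}) [s ->].
elim: s => [|x s IH] sub.
  have E : [set` ([::] : seq {classic T})] = set0.
    by apply/funext => y; apply/propext; split.
  rewrite E; apply/b2E; rewrite pc0.
  have -> : [set j | setT j /\ pc (@set0 T `&` F j) = true] = set0.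
    by apply/funext => i; apply/propext; split => // -[_]; rewrite set0I pc0.
  by rewrite pc0; split => //; exact: finite_set0.
have subs : [set` s] `<=` \bigcup_i F i.
  by move=> y ys; apply: sub => /=; rewrite inE ys orbT.
case xs: (x \in s).
  have -> : [set` x :: s] = [set` s] :> set {classic T}.
    apply/funext => y; apply/propext => /=; rewrite inE.
    by split => [/orP[/eqP->|]//|->]; rewrite orbT.
  exact: IH.
have E : [set` x :: s] = [set x] `|` [set` s] :> set {classic T}.
  apply/funext => y; apply/propext => /=; rewrite inE.
  split => [/orP[/eqP->|ys]|[->|ys]]; first by left.
  - by right.
  - by rewrite eqxx.
  - by rewrite ys orbT.
have fs : finite_set ([set` s] : set {classic T}) by exact: finite_seq.
have D1 : forall (Y : set T), [set x] `&` ([set` s] `&` Y) = set0.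
  move=> Y; apply/funext => y; apply/propext; split => // -[-> [/= ]].
  by rewrite xs.
have [j _ Fjx] : (\bigcup_i F i) x by apply: sub; rewrite /= inE eqxx.
have -> : (fun i => pc ([set` x :: s] `&` F i)) =
          (fun i => pc ([set` s] `&` F i) (+) `[< i = j >]).
  apply/funext => i.
  have f1 : finite_set ([set x] `&` F i).
    by apply: finite_setIl; exact: finite_set1.
  have f2 : finite_set ([set` s] `&` F i) by exact: finite_setIl.
  have d : ([set x] `&` F i) `&` ([set` s] `&` F i) = set0.
    apply/funext => y; apply/propext; split => // -[[-> _] [/= ]].
    by rewrite xs.
  rewrite E setIUl (@pcU _ _ _ f1 f2 d).
  rewrite addbC; congr (_ (+) _).
  case: (pselect (i = j)) => [->|ne].
    rewrite asboolT // (_ : [set x] `&` F j = [set x]) ?pc1 //.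
    by apply/funext => y; apply/propext; split => [[]//|->].
  rewrite asboolF // (_ : [set x] `&` F i = set0) ?pc0 //.
  apply/funext => y; apply/propext; split => // -[-> Fix].
  have := disj _ _ ne; move/(congr1 (fun S => S x)).
  by rewrite /= => <-; split.
have d : [set x] `&` [set` s] = set0 by have := D1 setT; rewrite setIT.
rewrite E (@pcU _ _ _ (finite_set1 x) fs d) pc1 /=; apply: pc_flip; exact: IH.
Qed.

Section Geo.
Variables (R : realType) (n : nat).
Local Notation V := 'rV[R]_n.

Lemma entry_le_norm (v : V) i : `|v ord0 i| <= `|v|.
Proof.
have /mapP[j Hj ->] : `|v ord0 i| \in [seq `|v x.1 x.2| | x : 'I_1 * 'I_n].
  by apply/mapP; exists (ord0, i) => //=; rewrite mem_enum.
by rewrite [leRHS]/Num.norm /= mx_normrE; apply/bigmax_geP; right => /=; exists j.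
Qed.

Lemma norm_le_entries (v : V) M : 0 <= M -> (forall i, `|v ord0 i| <= M) ->
  `|v| <= M.
Proof.
move=> M0 hM; rewrite [leLHS]/Num.norm /= mx_normrE; apply/bigmax_leP; split => //.
by move=> [i j] _ /=; rewrite (ord1 i); exact: hM.
Qed.

Lemma sum_sq_ge0 (v : V) : 0 <= \sum_(i < n) v ord0 i ^+ 2.
Proof. by apply: sumr_ge0 => i _; exact: sqr_ge0. Qed.

Lemma entry_le_eucl (v : V) i : `|v ord0 i| <= eucl_norm v.
Proof.
rewrite /eucl_norm -sqrtr_sqr ler_sqrt; last exact: sum_sq_ge0.
rewrite (bigD1 i) //= lerDl; apply: sumr_ge0 => j _; exact: sqr_ge0.
Qed.

Lemma norm_le_eucl (v : V) : `|v| <= eucl_norm v.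
Proof.
apply: norm_le_entries; first exact: sqrtr_ge0.
exact: entry_le_eucl.
Qed.

Lemma eucl_le_norm (v : V) : eucl_norm v <= n.+1%:R * `|v|.
Proof.
have h0 : 0 <= n.+1%:R * `|v| by apply: mulr_ge0.
rewrite /eucl_norm -(ger0_norm h0) -sqrtr_sqr ler_sqrt; last exact: sqr_ge0.
apply: (@le_trans _ _ (\sum_(i < n) `|v| ^+ 2)).
  apply: ler_sum => i _; rewrite -real_normK ?num_real //.
  by rewrite lerXn2r ?nnegrE ?normr_ge0 // entry_le_norm.
rewrite sumr_const card_ord -mulr_natr.
have hN : 0 <= n%:R :> R by [].
set N := n%:R : R; rewrite (_ : n.+1%:R = N + 1); last by rewrite /N -natr1.
have := normr_ge0 v; set x := `|v|; nra.
Qed.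

Lemma eucl_ge0 (v : V) : 0 <= eucl_norm v.
Proof. exact: sqrtr_ge0. Qed.

Lemma diam_le (B : set V) r : 0 <= r ->
  (forall y z, B y -> B z -> eucl_norm (y - z) <= r) -> diam B <= r.
Proof.
move=> r0 h; rewrite /diam.
set S := [set r | exists x y, B x /\ B y /\ r = eucl_norm (x - y)].
case: (pselect (exists y, S y)) => [[y Sy]|ne].
  apply: ge_sup; first by exists y.
  by move=> _ [a [b [Ba [Bb ->]]]]; exact: h.
have -> : S = set0.
  by apply/funext => y; apply/propext; split => // Sy; apply: ne; exists y.
by rewrite sup0.
Qed.


Variable (mu : set 'rV[R]_n -> bool).
Hypothesis hmu : is_B2measure mu.

Lemma ballE (x y : V) r : ball x r y <-> `|x - y| < r.
Proof. by rewrite -ball_normE. Qed.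

Lemma in_Un0 : in_Un (@set0 V).
Proof. by exists 0. Qed.

Lemma in_Un_sub {A B : set V} : A `<=` B -> in_Un B -> in_Un A.
Proof. by move=> AB [M hM]; exists M => x /AB /hM. Qed.

Lemma in_UnU {A B : set V} : in_Un A -> in_Un B -> in_Un (A `|` B).
Proof.
move=> [M1 h1] [M2 h2]; exists (Num.max M1 M2) => x [/h1|/h2] h;
  by rewrite le_max h ?orbT.
Qed.

Lemma in_Un1 (x : V) : in_Un [set x].
Proof. by exists (eucl_norm x) => y ->. Qed.

Lemma mu0 : mu set0 = false.
Proof.
have := hmu (fun _ => set0) (fun _ => in_Un0) (fun _ _ _ => setI0 _).
have hb : in_Un (\bigcup_(i : nat) (@set0 V)) by exists 0 => x [].
move/(_ hb)/b2E => [fin _]; case h: (mu set0) => //.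
exfalso; apply: infinite_nat; move: fin; congr finite_set.
by apply/funext => i; apply/propext; split.
Qed.

Ltac solve_b := split;
  [ case=> _; first [ by left | by right | by [] ]
  | let H := fresh "H" in intro H;
    first [ by split | by discriminate H | by case: H => H; discriminate H ] ].

Lemma muU {A B : set V} : in_Un A -> in_Un B -> A `&` B = set0 ->
  mu (A `|` B) = mu A (+) mu B.
Proof.
move=> hA hB AB.
pose F := fun i : nat => if i == 0%N then A else if i == 1%N then B else set0.
have hF : forall i, in_Un (F i).
  by move=> [|[|i]] //=; exact: in_Un0.
have dF : forall i j, i <> j -> F i `&` F j = set0.
  move=> [|[|i]] [|[|j]] //= _; rewrite ?setI0 ?set0I // setIC //.
have EU : \bigcup_i F i = A `|` B.
  apply/funext => x; apply/propext; split.
    by move=> [[|[|i]] _ //=]; [left|right].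
  by move=> [Ax|Bx]; [exists 0%N|exists 1%N].
have := @hmu F hF dF; rewrite EU => /(_ (in_UnU hA hB)) /b2E [_ ->].
set S := [set j | _ /\ _].
case hmA: (mu A); case hmB: (mu B) => /=.
- have -> : S = [set 0%N] `|` [set 1%N].
    apply/funext => -[|[|i]]; apply/propext; rewrite /S /F /= ?hmA ?hmB ?mu0; solve_b.
  by rewrite pcU ?pc1 //; try exact: finite_set1;
    apply/funext => i; apply/propext; split => // -[->].
- have -> : S = [set 0%N].
    apply/funext => -[|[|i]]; apply/propext; rewrite /S /F /= ?hmA ?hmB ?mu0; solve_b.
  exact: pc1.
- have -> : S = [set 1%N].
    apply/funext => -[|[|i]]; apply/propext; rewrite /S /F /= ?hmA ?hmB ?mu0; solve_b.
  exact: pc1.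
- have -> : S = set0.
    apply/funext => -[|[|i]]; apply/propext; rewrite /S /F /= ?hmA ?hmB ?mu0; solve_b.
  exact: pc0.
Qed.

Lemma eucl0 : eucl_norm (0 : V) = 0.
Proof.
rewrite /eucl_norm big1 ?sqrtr0 // => i _; by rewrite mxE expr0n.
Qed.

Lemma diam1 (x : V) : diam [set x] <= 0.
Proof. by apply: diam_le => // y z -> ->; rewrite subrr eucl0. Qed.

Lemma dmu1 {x a} : dmu_is mu x a -> mu [set x] = a.
Proof.
move=> [eps e0 h]; apply: h; [exact: in_Un1 | by [] |].
exact: le_lt_trans (diam1 x) e0.
Qed.

Definition Kbody (x : V) (r : R) := 0 < r /\
  forall C, in_Un C -> (forall y, C y -> ball x r y) ->
    (C x -> mu C = mu [set x]) /\ (~ C x -> mu C = false).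

Lemma Kprop x a : dmu_is mu x a -> exists r, Kbody x r.
Proof.
move=> hd; have := dmu1 hd; case: hd => eps e0 h ha.
set c : R := n.+1%:R.
have c0 : 0 < c by rewrite /c ltr0n.
exists (eps / (4 * c)); split; first by rewrite divr_gt0 // mulr_gt0.
move=> C hC hball.
have hC' : in_Un ([set x] `|` C) by apply: in_UnU => //; exact: in_Un1.
have hm : mu ([set x] `|` C) = mu [set x].
  rewrite ha; apply: h => //; first by left.
  apply: (@le_lt_trans _ _ (eps / 2)); last first.
    by rewrite ltr_pdivrMr // ltr_pMr //ltr1n.
  apply: diam_le; first by rewrite divr_ge0 // ltW.
  have hb : forall y, ([set x] `|` C) y -> `|x - y| <= eps / (4 * c).
    move=> y [->|/hball/ballE/ltW //]; rewrite subrr normr0.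
    by rewrite divr_ge0 // ?mulr_ge0 // ltW.
  move=> y z /hb hy /hb hz.
  apply: (le_trans (eucl_le_norm _)).
  have : `|y - z| <= `|x - y| + `|x - z|.
    by rewrite (distrC x y); rewrite (_ : y - z = (y - x) + (x - z)) ?ler_normD // addrA subrK.
  move=> hyz; rewrite -/c.
  have e1 : eps / (4 * c) * c = eps / 4 by field; rewrite gt_eqF.
  move: hy hz hyz e1; set r := eps / (4 * c); move=> hy hz hyz e1.
  have : c * `|y - z| <= c * (2 * r).
    rewrite ler_pM2l //; apply: (le_trans hyz); lra.
  move=> h2; apply: (le_trans h2).
  have -> : c * (2 * r) = 2 * (r * c) by rewrite mulrC -mulrA.
  rewrite e1; lra.
split.
  move=> Cx; rewrite -hm; congr mu; apply/funext => y; apply/propext.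
  by split => [Cy|[->|//]]; [right|].
move=> nCx; have d : [set x] `&` C = set0.
  by apply/funext => y; apply/propext; split => // -[-> ].
move: hm; rewrite (muU (in_Un1 x) hC d).
by case: (mu [set x]); case: (mu C).
Qed.

Definition Pt (C : set V) := [set y | C y /\ mu [set y] = true].
Definition Good (C : set V) := finite_set (Pt C) /\ mu C = pc (Pt C).

Lemma Good_ball x r : Kbody x r -> forall C, in_Un C ->
  (forall y, C y -> ball x r y) -> Good C.
Proof.
move=> [r0 hK] C hC hb.
have other : forall y, C y -> y <> x -> mu [set y] = false.
  move=> y Cy ne; apply: (proj2 (hK _ (in_Un1 y) _)).
    by move=> z ->; exact: hb.
  by move=> e; apply: ne.
have [mC hmC] := hK C hC hb.
case: (pselect (C x)) => Cx.
  rewrite /Good (mC Cx); case hx: (mu [set x]).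
    have -> : Pt C = [set x].
      apply/funext => y; apply/propext; split.
        move=> [Cy my]; case: (pselect (y = x)) => // ne.
        by rewrite other in my.
      by move=> ->; split.
    by rewrite pc1; split => //; exact: finite_set1.
  have -> : Pt C = set0.
    apply/funext => y; apply/propext; split => // -[Cy my].
    case: (pselect (y = x)) => [e|ne]; first by rewrite e hx in my.
    by rewrite other in my.
  by rewrite pc0; split => //; exact: finite_set0.
rewrite /Good; have -> : Pt C = set0.
  apply/funext => y; apply/propext; split => // -[Cy my].
  case: (pselect (y = x)) => [e|ne]; first by rewrite -e in Cx.
  by rewrite other in my.
by rewrite pc0 hmC //; split => //; exact: finite_set0.
Qed.

Lemma Good_U C1 C2 : in_Un C1 -> in_Un C2 -> C1 `&` C2 = set0 ->
  Good C1 -> Good C2 -> Good (C1 `|` C2).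
Proof.
move=> h1 h2 d [f1 e1] [f2 e2].
rewrite /Good.
have -> : Pt (C1 `|` C2) = Pt C1 `|` Pt C2.
  apply/funext => y; apply/propext; split.
    by move=> [[c|c] m]; [left|right].
  by move=> [[c m]|[c m]]; split => //; [left|right].
have dP : Pt C1 `&` Pt C2 = set0.
  apply/funext => y; apply/propext; split => // -[[c1 _] [c2 _]].
  by rewrite -d; split.
split; first by rewrite finite_setU.
by rewrite (muU h1 h2 d) (@pcU _ _ _ f1 f2 dP) e1 e2.
Qed.

Lemma Good_cover (delta : V -> R) (s : seq V) :
  (forall x, x \in s -> Kbody x (delta x)) ->
  forall C, in_Un C -> C `<=` (fun y => exists2 x, x \in s & ball x (delta x) y) ->
  Good C.
Proof.
elim: s => [|x s IH] hK C hC hsub.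
  have -> : C = set0.
    by apply/funext => y; apply/propext; split => // /hsub [].
  by rewrite /Good mu0 // (_ : Pt set0 = set0) ?pc0; [split => //; exact: finite_set0|
    apply/funext => y; apply/propext; split => // -[]].
have -> : C = (C `&` ball x (delta x)) `|` (C `\` ball x (delta x)).
  by rewrite setUIDK.
have hC1 : in_Un (C `&` ball x (delta x)) by apply: in_Un_sub hC => y [].
have hC2 : in_Un (C `\` ball x (delta x)) by apply: in_Un_sub hC => y [].
apply: Good_U => //.
- by apply/funext => y; apply/propext; split => // -[[_ b] [_ nb]].
- by apply: Good_ball (hK x _) _ hC1 _ => [|y []//]; rewrite inE eqxx.
apply: IH hC2 _.
  by move=> y ys; apply: hK; rewrite inE ys orbT.
move=> y [Cy nb]; have [z] := hsub y Cy; rewrite inE => /orP[/eqP->//|zs] bz.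
by exists z.
Qed.



Lemma closure_norm {A : set V} {M} : (forall x, A x -> eucl_norm x <= M) ->
  forall x, closure A x -> `|x| < M + 1.
Proof.
move=> hM x cx.
have [a [Aa bxa]] := cx _ (nbhsx_ballx x 1 ltr01).
move/ballE: bxa => bxa.
have h1 := ler_normD (x - a) a.
have h2 : `|a| <= M by apply: le_trans (norm_le_eucl a) (hM a Aa).
rewrite (_ : x - a + a = x) in h1; last by rewrite subrK.
lra.
Qed.

Lemma in_Un_closure {A : set V} : in_Un A -> in_Un (closure A).
Proof.
move=> [M hM]; exists (n.+1%:R * (M + 1)) => x cx.
apply: (le_trans (eucl_le_norm x)); rewrite ler_pM2l ?ltr0n //.
exact: ltW (closure_norm hM _ cx).
Qed.

Lemma bounded_closure {A : set V} : in_Un A -> bounded_set (closure A).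
Proof.
move=> [M hM]; exists (M + 1); split; first exact: num_real.
move=> M' hM' x cx /=.
by apply/ltW; apply: lt_trans (closure_norm hM _ cx) hM'.
Qed.

Lemma GoodA {A : set V} : in_Un A -> derivable_on mu (closure A) ->
  forall C, C `<=` A -> Good C.
Proof.
move=> hA hder.
have hd : forall x, exists r, closure A x -> Kbody x r.
  move=> x; case: (pselect (closure A x)) => cx; last by exists 1.
  have [a ha] := hder x cx; have [r hr] := Kprop _ _ ha; by exists r.
have [d hd'] := choice hd.
have hc : compact (closure A).
  exact: bounded_closed_compact (bounded_closure hA) (@closed_closure _ A).
rewrite compact_cover in hc.
have hcov : closure A `<=` cover (closure A) (fun x => ball x (d x)).
  by move=> x cx; exists x => //; apply: ballxx; exact: (proj1 (hd' x cx)).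
have [D' subD cov] := hc V (closure A) (fun x => ball x (d x))
  (fun x _ => ball_open x (d x)) hcov.
move=> C CA; apply: (@Good_cover d (enum_fset D')).
- by move=> x xD; apply: hd'; have := subD x xD; rewrite in_setE; exact.
- exact: in_Un_sub CA hA.
move=> y Cy; have [x xD bx] := cov y (subset_closure (CA y Cy)).
by exists x.
Qed.

Lemma parta (A : set V) : in_Un A -> derivable_on mu (closure A) ->
     [/\ finite_set (supp_dmu mu A),
         (forall x, A x -> exists2 eps : R, 0 < eps &
            forall B, in_Un B -> B x -> diam B < eps ->
              mu (B `\ x) = false),
         b2sum_eq A (fun x => mu [set x]) (mu A) &
         (forall (I : Type) (F : I -> set V),
            is_partition F A ->
            b2sum_eq setT (fun i => mu (F i)) (mu A))].
Proof.
move=> hA hder; have hG := GoodA hA hder.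
have [finA eA] := hG A (fun _ h => h).
split.
- apply: sub_finite_set finA => x [Ax hx]; split => //; exact: dmu1 hx.
- move=> x Ax; have [a hx] := hder x (subset_closure Ax).
  have h1 := dmu1 hx; have [eps e0 h] := hx.
  exists eps => // B hB Bx dB; have hBx := h B hB Bx dB.
  have hB' : in_Un (B `\ x) by apply: in_Un_sub hB => y [].
  have d : (B `\ x) `&` [set x] = set0.
    by apply/funext => y; apply/propext; split => // -[[_ ne] e]; apply: ne.
  have eB : B = (B `\ x) `|` [set x].
    by apply/funext => y; apply/propext; split => [By|[[]//|->//]];
      case: (pselect (y = x)) => [->|ne]; [right|left].
  move: hBx; rewrite -h1 {1}eB (muU hB' (in_Un1 x) d).
  by case: (mu (B `\ x)); case: (mu [set x]).
- by apply/b2E; split.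
move=> I F [ne disj cov].
have FA : forall i, F i `<=` A by move=> i y Fy; rewrite -cov; exists i.
have sub : Pt A `<=` \bigcup_i F i by rewrite cov => y [].
have := @part_par _ _ F disj (Pt A) finA sub.
have -> : (fun i => pc (Pt A `&` F i)) = (fun i => mu (F i)).
  apply/funext => i; have [_ ->] := hG (F i) (FA i); congr pc.
  apply/funext => y; apply/propext; split.
    by move=> [[Ay my] Fy]; split.
  by move=> [Fy my]; split => //; split => //; exact: FA i y Fy.
by rewrite eA.
Qed.

End Geo.

Theorem corollary5p14 (R : realType) (n : nat) (hn : (0 < n)%N)
  (mu : set 'rV[R]_n -> bool) (hmu : is_B2measure mu) :
  (forall A : set 'rV[R]_n, in_Un A -> derivable_on mu (closure A) ->
     [/\ finite_set (supp_dmu mu A),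
         (forall x, A x -> exists2 eps : R, 0 < eps &
            forall B, in_Un B -> B x -> diam B < eps ->
              mu (B `\ x) = false),
         b2sum_eq A (fun x => mu [set x]) (mu A) &
         (forall (I : Type) (F : I -> set 'rV[R]_n),
            is_partition F A ->
            b2sum_eq setT (fun i => mu (F i)) (mu A))])
  /\
  ((forall B : set 'rV[R]_n, in_Un B -> derivable_on mu B) ->
     locally_finite [set x | dmu_is mu x true]).
Proof.
split; first by move=> A hA hd; exact: (@parta R n mu hmu A hA hd).
move=> hall B hB.
have hc := @in_Un_closure R n B hB.
have [f _ _ _] := @parta R n mu hmu B hB (hall _ hc).
exact: f.
Qed.
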